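(* Let $m,n$ be positive integers and $x\ge 2$ real. Define $\alpha_j\ge 0$ ($1\le j\le n$) and $\beta_k\ge0$ ($1\le k\le m$) by $$\cosh\alpha_j+\cos\frac{\pi(j-\frac12)}{n}=x=\cosh\beta_k+\cos\frac{\pi(k-\frac12)}{m}.$$ Then $$\prod_{j=1}^n 2\cosh(m\alpha_j)=\prod_{k=1}^m 2\cosh(n\beta_k).$$ *)

(* Defs.v *)
From Stdlib Require Import Reals Lra Lia.
Open Scope R_scope.

Fixpoint prod_1_to (f : nat -> R) (n : nat) : R :=
  match n with
  | O => 1
  | S k => prod_1_to f k * f (S k)
  end.

(* Main.v *)
Require Import Defs.
From Stdlib Require Import Reals Lra Lia.
Open Scope R_scope.

Fixpoint chebf (m : nat) (z : R) : R :=
  match m with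
  | O => 2
  | S O => z
  | S ((S k) as k') => z * chebf k' z - chebf k z
  end.

Lemma chebf_cos m t : chebf m (2 * cos t) = 2 * cos (INR m * t).
Proof.
assert (H : chebf m (2 * cos t) = 2 * cos (INR m * t) /\
            chebf (S m) (2 * cos t) = 2 * cos (INR (S m) * t)).
{ induction m as [|m [IH1 IH2]].
  - simpl. rewrite Rmult_0_l, cos_0, Rmult_1_l. split; ring.
  - split; [exact IH2|].
    change (chebf (S (S m)) (2 * cos t)) with
      (2 * cos t * chebf (S m) (2 * cos t) - chebf m (2 * cos t)).
    rewrite IH1, IH2.
    replace (INR (S (S m)) * t) with (INR (S m) * t + t) by (rewrite (S_INR (S m)); ring).
    replace (INR m * t) with (INR (S m) * t - t) by (rewrite (S_INR m); ring).
    rewrite cos_plus, cos_minus. ring. }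
apply H.
Qed.

Lemma chebf_cosh m t : chebf m (2 * cosh t) = 2 * cosh (INR m * t).
Proof.
assert (H : chebf m (2 * cosh t) = 2 * cosh (INR m * t) /\
            chebf (S m) (2 * cosh t) = 2 * cosh (INR (S m) * t)).
{ induction m as [|m [IH1 IH2]].
  - simpl. rewrite Rmult_0_l, cosh_0, Rmult_1_l. split; ring.
  - split; [exact IH2|].
    change (chebf (S (S m)) (2 * cosh t)) with
      (2 * cosh t * chebf (S m) (2 * cosh t) - chebf m (2 * cosh t)).
    rewrite IH1, IH2. unfold cosh.
    set (a := INR (S m) * t).
    replace (INR (S (S m)) * t) with (a + t) by (unfold a; rewrite (S_INR (S m)); ring).
    replace (INR m * t) with (a - t) by (unfold a; rewrite (S_INR m); ring).
    replace (- (a + t)) with (-a + - t) by ring.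
    replace (- (a - t)) with (-a + t) by ring.
    replace (a - t) with (a + - t) by ring.
    rewrite !exp_plus.
    assert (E : exp t * exp (- t) = 1) by (rewrite <- exp_plus, Rplus_opp_r; apply exp_0).
    field_simplify. rewrite ?E.
    assert (E2 : exp (-t) = / exp t).
    { apply Rmult_eq_reg_l with (exp t). rewrite E, Rinv_r. reflexivity.
      apply Rgt_not_eq, exp_pos. apply Rgt_not_eq, exp_pos. }
    rewrite E2. field. apply Rgt_not_eq, exp_pos. }
apply H.
Qed.

Lemma angle_root m k : (0 < m)%nat ->
  cos (INR m * (PI * (INR k - 1/2) / INR m)) = 0.
Proof.
intros Hm. assert (0 < INR m) by (apply lt_0_INR; lia).
replace (INR m * (PI * (INR k - 1/2) / INR m)) with (INR k * PI - PI/2) by (field; lra).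
rewrite cos_minus, cos_PI2, sin_PI2.
rewrite sin_eq_0_1. ring. exists (Z.of_nat k). rewrite <- INR_IZR_INZ. reflexivity.
Qed.

Lemma angle_range m k : (1 <= k <= m)%nat ->
  0 <= PI * (INR k - 1/2) / INR m <= PI.
Proof.
intros Hk. assert (1 <= INR k) by (apply (le_INR 1); lia).
assert (INR k <= INR m) by (apply le_INR; lia).
assert (0 < INR m) by lra. pose proof PI_RGT_0.
split.
- apply Rmult_le_pos; [apply Rmult_le_pos; lra | left; apply Rinv_0_lt_compat; lra].
- apply Rmult_le_reg_r with (INR m); [lra|].
  unfold Rdiv. rewrite Rmult_assoc, Rinv_l by lra. nra.
Qed.
Lemma angle_inj m a b : (0 < m)%nat ->
  PI * (INR a - 1/2) / INR m = PI * (INR b - 1/2) / INR m -> a = b.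
Proof.
intros Hm H. assert (0 < INR m) by (apply lt_0_INR; lia). pose proof PI_RGT_0.
apply INR_eq.
assert (H2 : PI * (INR a - 1/2) = PI * (INR b - 1/2)).
{ apply Rmult_eq_reg_r with (/ INR m). exact H. apply Rgt_not_eq, Rinv_0_lt_compat; lra. }
apply Rmult_eq_reg_l in H2; lra.
Qed.

Definition croot m k := 2 * cos (PI * (INR k - 1/2) / INR m).

From mathcomp Require all_boot all_algebra Rstruct.
Module MC.
Import all_boot all_algebra Rstruct.
Import GRing.Theory Num.Theory.
Local Open Scope ring_scope.

Fixpoint cheb (m : nat) : {poly R} :=
  match m with
  | O => 2%:P
  | S O => 'X
  | S ((S k) as k') => 'X * cheb k' - cheb k
  end.

Lemma cheb_SS m : cheb m.+2 = 'X * cheb m.+1 - cheb m. Proof. by []. Qed.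
Lemma chebf_SS m z : chebf m.+2 z = (z * chebf m.+1 z - chebf m z)%R. Proof. by []. Qed.

Lemma cheb_eval m z : (cheb m).[z] = chebf m z.
Proof.
elim/ltn_ind: m => -[|[|m]] IH; [by rewrite hornerC | by rewrite hornerX |].
rewrite cheb_SS chebf_SS hornerD hornerN hornerM hornerX !IH //.
Qed.

Lemma cheb_size m : (0 < m)%N -> size (cheb m) = m.+1 /\ cheb m \is monic.
Proof.
elim/ltn_ind: m => -[|[|m]] IH // _.
  by rewrite /= size_polyX monicX.
have [s1 m1] := IH m.+1 (ltnSn _) isT.
have s0 : (size (cheb m) <= m.+1)%N.
  case: m IH {s1 m1} => [|m] IH; first by rewrite /= size_polyC; case: (_ != _).
  by have [-> _] := IH m.+1 (ltnW (ltnSn _)) isT.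
have sX : size ('X * cheb m.+1) = m.+3.
  by rewrite mulrC size_mulX ?s1 // -size_poly_eq0 s1.
have lt : (size (- cheb m)%R < size ('X * cheb m.+1)%R)%N.
  by rewrite size_opp sX; apply: leq_ltn_trans s0 _.
change (cheb m.+2) with ('X * cheb m.+1 - cheb m).
split; first by rewrite size_addl // sX.
rewrite monicE lead_coefDl // lead_coefM lead_coefX mul1r.
exact: m1.
Qed.

Lemma prod_iota (f : nat -> R) m :
  \prod_(k <- iota 1 m) f k = Defs.prod_1_to f m.
Proof.
elim: m => [|m IH]; first by rewrite big_nil.
change (Defs.prod_1_to f m.+1) with (Defs.prod_1_to f m * f m.+1)%R.
by rewrite -IH -[m.+1]addn1 iotaD big_cat big_seq1 add1n addn1.
Qed.

Lemma cheb_factor_mc m (Hm : (0 < m)%N) (rs : seq R) :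
  size rs = m -> all (fun r => chebf m r == 0) rs -> uniq rs ->
  forall z, chebf m z = \prod_(r <- rs) (z - r).
Proof.
move=> sr ar ur z; rewrite -cheb_eval.
have [s mo] := @cheb_size m Hm.
rewrite (all_roots_prod_XsubC (p := cheb m) (rs := rs)).
- by rewrite (monicP mo) scale1r horner_prod; apply: eq_bigr => r _; rewrite hornerXsubC.
- by rewrite s sr.
- by apply/allP => r /(allP ar) /eqP H; rewrite /root cheb_eval H.
- by rewrite uniq_rootsE.
Qed.

Lemma cheb_factor m : (0 < m)%coq_nat -> forall z,
  chebf m z = Defs.prod_1_to (fun k => Rminus z (croot m k)) m.
Proof.
move=> /ltP Hm z.
rewrite (@cheb_factor_mc m Hm (map (croot m) (iota 1 m))).
- by rewrite big_map prod_iota.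
- by rewrite size_map size_iota.
- apply/allP => r /mapP [k _ ->]; rewrite /croot chebf_cos angle_root ?Rmult_0_r //.
  exact/ltP.
- rewrite map_inj_in_uniq ?iota_uniq // => a b; rewrite !mem_iota => /andP [a1 a2] /andP [b1 b2].
  rewrite /croot => E.
  have E' : cos (PI * (INR a - 1/2) / INR m) = cos (PI * (INR b - 1/2) / INR m).
    exact: (Rmult_eq_reg_l _ _ _ E (Rgt_not_eq _ _ Rlt_0_2)).
  have ra : le 1 a /\ le a m by split; apply/leP; [exact: a1 | rewrite -ltnS -[m.+1]add1n; exact: a2].
  have rb : le 1 b /\ le b m by split; apply/leP; [exact: b1 | rewrite -ltnS -[m.+1]add1n; exact: b2].
  have H := cos_inj _ _ (angle_range m a ra) (angle_range m b rb) E'.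
  exact: (angle_inj _ _ _ (elimT ltP Hm) H).
Qed.

End MC.

Lemma prod_ext (f g : nat -> R) n :
  (forall j, (1 <= j <= n)%nat -> f j = g j) -> prod_1_to f n = prod_1_to g n.
Proof.
induction n as [|n IH]; intros H; simpl; [reflexivity|].
rewrite IH, H; [reflexivity| lia | intros; apply H; lia].
Qed.

Lemma prod_mul (f g : nat -> R) n :
  prod_1_to (fun j => f j * g j) n = prod_1_to f n * prod_1_to g n.
Proof. induction n as [|n IH]; simpl; [ring| rewrite IH; ring]. Qed.

Lemma prod_one n : prod_1_to (fun _ => 1) n = 1.
Proof. induction n as [|n IH]; simpl; [reflexivity| rewrite IH; ring]. Qed.

Lemma prod_swap (g : nat -> nat -> R) n m :
  prod_1_to (fun j => prod_1_to (fun k => g j k) m) n =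
  prod_1_to (fun k => prod_1_to (fun j => g j k) n) m.
Proof.
induction n as [|n IH]; simpl.
- symmetry; apply prod_one.
- rewrite IH, <- prod_mul. reflexivity.
Qed.

Theorem mainTheorem10 (m n : nat) (x : R) (alpha beta : nat -> R) :
  (0 < m)%nat -> (0 < n)%nat -> 2 <= x ->
  (forall j : nat, (1 <= j <= n)%nat ->
     0 <= alpha j /\ cosh (alpha j) + cos (PI * (INR j - 1/2) / INR n) = x) ->
  (forall k : nat, (1 <= k <= m)%nat ->
     0 <= beta k /\ cosh (beta k) + cos (PI * (INR k - 1/2) / INR m) = x) ->
  prod_1_to (fun j => 2 * cosh (INR m * alpha j)) n =
  prod_1_to (fun k => 2 * cosh (INR n * beta k)) m.
Proof.
intros Hm Hn Hx Ha Hb.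
transitivity (prod_1_to (fun j => prod_1_to (fun k => 2 * x - croot n j - croot m k) m) n).
{ apply prod_ext; intros j Hj.
  rewrite <- chebf_cosh, MC.cheb_factor by exact Hm.
  destruct (Ha j Hj) as [_ E].
  apply prod_ext; intros k _. unfold croot. rewrite <- E. ring. }
rewrite prod_swap.
symmetry.
apply prod_ext; intros k Hk.
rewrite <- chebf_cosh, MC.cheb_factor by exact Hn.
destruct (Hb k Hk) as [_ E].
apply prod_ext; intros j _. unfold croot. rewrite <- E. ring.
Qed.
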